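(* In the setting of the context, assume $\Pi^\rho_\nu\ne\emptyset$ for all $\nu\ge0$. Then the following are equivalent: (a) $\rho_1>0$; (b) $\mathcal{E}_\rho\ne\emptyset$. Moreover, if $\rho_1>0$, then $\mathcal{E}_\rho=\{(k\rho_1,k):k\ge0\}$.
   Context: Let $(\Omega,\mathcal{F},\mathbb{P})$ be a probability space and a market: riskless asset $S^0_0=1$, $S^0_1=1+r$, $r>-1$; risky assets $S^1,\dots,S^d$ with constants $S^i_0>0$ and real-valued $\mathcal{F}$-measurable $S^i_1$; returns $R^i:=(S^i_1-S^i_0)/S^i_0$. Standing assumptions: nonredundancy (if $\theta\in\mathbb{R}^{1+d}$ with $\sum_{i=0}^d\theta^iS^i_t=0$ a.s. for $t\in\{0,1\}$ then $\theta=0$), $R^i\in L^1$, $\mathbb{E}[R^i]\ne r$ for some $i$. Excess return of $\pi\in\mathbb{R}^d$: $X_\pi:=\pi\cdot(R-r\mathbf{1})$; $\Pi_\nu:=\{\pi:\mathbb{E}[X_\pi]=\nu\}$. $L$ is a Riesz space with $L^\infty\subset L\subset L^1$ containing all $X_\pi$; $\rho:L\to(-\infty,\infty]$ is monotone, cash-invariant and positively homogeneous. $\rho_\nu:=\inf\{\rho(X_\pi):\pi\in\Pi_\nu\}$; $\Pi^\rho_\nu$ is the set of $\pi\in\Pi_\nu$ with $\rho(X_\pi)<\infty$ and $\rho(X_\pi)\le\rho(X_{\pi'})$ for all $\pi'\in\Pi_\nu$. $\pi$ is strictly $\rho$-preferred over $\pi'$ if $\mathbb{E}[X_\pi]\ge\mathbb{E}[X_{\pi'}]$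 and $\rho(X_\pi)\le\rho(X_{\pi'})$ with one inequality strict; $\pi$ is $\rho$-efficient if $\mathbb{E}[X_\pi]\ge0$ and no portfolio is strictly $\rho$-preferred over it. The $\rho$-efficient frontier is $\mathcal{E}_\rho:=\{(\rho(X_\pi),\mathbb{E}[X_\pi]):\pi \text{ is } \rho\text{-efficient}\}$. *)

(* Defs.v *)
From HB Require Import structures.
From mathcomp Require Import all_boot all_order all_algebra.
From mathcomp Require Import all_classical all_reals all_analysis.
Set Implicit Arguments. Unset Strict Implicit. Unset Printing Implicit Defensive.
Import Order.TTheory GRing.Theory Num.Theory.
Local Open Scope classical_set_scope.
Local Open Scope ring_scope.

Definition ret (R : realType) (T : Type) (d : nat)
  (S0 : 'I_d -> R) (S1 : 'I_d -> T -> R) (i : 'I_d) : T -> R :=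
  fun w => (S1 i w - S0 i) / S0 i.

Definition Xpi (R : realType) (T : Type) (d : nat)
  (r : R) (Rt : 'I_d -> T -> R) (pi : 'I_d -> R) : T -> R :=
  fun w => \sum_(i < d) pi i * (Rt i w - r).

Definition expect (d0 : measure_display) (T : measurableType d0) (R : realType)
  (P : probability T R) (X : T -> R) : R :=
  fine (\int[P]_w (X w)%:E).

Section Portfolio.
Context (d0 : measure_display) (T : measurableType d0) (R : realType)
  (P : probability T R) (d : nat)
  (X : ('I_d -> R) -> T -> R)
  (rho : (T -> R) -> \bar R).

Definition Pi_nu (nu : R) : set ('I_d -> R) :=
  [set pi | expect P (X pi) = nu].

Definition rho_nu (nu : R) : \bar R :=
  ereal_inf [set rho (X pi) | pi in Pi_nu nu].

Definition Pi_rho_nu (nu : R) : set ('I_d -> R) :=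
  [set pi | Pi_nu nu pi /\ (rho (X pi) < +oo)%E /\
            forall pi', Pi_nu nu pi' -> (rho (X pi) <= rho (X pi'))%E].

Definition strictly_preferred (pi pi' : 'I_d -> R) : Prop :=
  (expect P (X pi) >= expect P (X pi') /\ (rho (X pi) <= rho (X pi'))%E) /\
  (expect P (X pi) > expect P (X pi') \/ (rho (X pi) < rho (X pi'))%E).

Definition rho_efficient (pi : 'I_d -> R) : Prop :=
  0 <= expect P (X pi) /\ ~ (exists pi', strictly_preferred pi' pi).

Definition efficient_frontier : set (\bar R * R) :=
  [set (rho (X pi), expect P (X pi)) | pi in rho_efficient].

End Portfolio.

Definition in_Linfty (d0 : measure_display) (T : measurableType d0) (R : realType)
  (P : probability T R) (f : T -> R) : Prop :=
  measurable_fun setT f /\ exists c : R, {ae P, forall w, `|f w| <= c}.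

Definition in_L1 (d0 : measure_display) (T : measurableType d0) (R : realType)
  (P : probability T R) (f : T -> R) : Prop :=
  measurable_fun setT f /\ P.-integrable setT (EFin \o f).

(* L is a Riesz space (vector sublattice) with L^infty ⊂ L ⊂ L^1,
   saturated w.r.t. P-a.s. equality (i.e. a set of equivalence classes) *)
Definition riesz_L (d0 : measure_display) (T : measurableType d0) (R : realType)
  (P : probability T R) (L : set (T -> R)) : Prop :=
  (forall f, in_Linfty P f -> L f) /\
  (forall f, L f -> in_L1 P f) /\
  (forall f g, L f -> L g -> L (f \+ g)) /\
  (forall (a : R) f, L f -> L (fun w => a * f w)) /\
  (forall f g, L f -> L g -> L (fun w => Num.max (f w) (g w))) /\
  (forall f g, L f -> measurable_fun setT g ->
         {ae P, forall w, f w = g w} -> L g).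

Definition risk_functional (d0 : measure_display) (T : measurableType d0)
  (R : realType) (P : probability T R) (L : set (T -> R))
  (rho : (T -> R) -> \bar R) : Prop :=
  [/\ (forall f, L f -> rho f != -oo%E),
      (forall f g, L f -> L g -> {ae P, forall w, f w <= g w} ->
         (rho g <= rho f)%E),
      (forall f (c : R), L f -> rho (fun w => f w + c) = (rho f - c%:E)%E)
    & (forall f (l : R), L f -> 0 < l -> rho (fun w => l * f w) = (l%:E * rho f)%E)].

(* Main.v *)
Require Import Defs.
From HB Require Import structures.
From mathcomp Require Import all_boot all_order all_algebra.
From mathcomp Require Import all_classical all_reals all_analysis.
From mathcomp Require Import lra.
Import Order.TTheory GRing.Theory Num.Theory.
Local Open Scope classical_set_scope.
Local Open Scope ring_scope.

Theorem proposition3p15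
  (d0 : measure_display) (T : measurableType d0) (R : realType)
  (P : probability T R) (d : nat)
  (r : R) (S0 : 'I_d -> R) (S1 : 'I_d -> T -> R)
  (L : set (T -> R)) (rho : (T -> R) -> \bar R) :
  -1 < r ->
  (forall i, 0 < S0 i) ->
  (forall i, measurable_fun setT (S1 i)) ->
  (* nonredundancy *)
  (forall (th0 : R) (th : 'I_d -> R),
     th0 + \sum_(i < d) th i * S0 i = 0 ->
     {ae P, forall w, th0 * (1 + r) + \sum_(i < d) th i * S1 i w = 0} ->
     th0 = 0 /\ forall i, th i = 0) ->
  (forall i, P.-integrable setT (EFin \o ret S0 S1 i)) ->
  (exists i, expect P (ret S0 S1 i) != r) ->
  riesz_L P L ->
  (forall pi, L (Xpi r (ret S0 S1) pi)) ->
  risk_functional P L rho ->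
  (forall nu, 0 <= nu -> Pi_rho_nu P (Xpi r (ret S0 S1)) rho nu !=set0) ->
  ((0 < rho_nu P (Xpi r (ret S0 S1)) rho 1)%E <->
     efficient_frontier P (Xpi r (ret S0 S1)) rho !=set0) /\
  ((0 < rho_nu P (Xpi r (ret S0 S1)) rho 1)%E ->
     efficient_frontier P (Xpi r (ret S0 S1)) rho =
       [set p | exists2 k : R, 0 <= k &
          p = ((k%:E * rho_nu P (Xpi r (ret S0 S1)) rho 1)%E, k)]).
Proof.
move=> _ _ _ _ _ _ HL HXL [Hny _ _ Hhom] Hex.
set X := Xpi r (ret S0 S1).
have XZ : forall (l : R) pi, X (fun i => l * pi i) = (fun w => l * X pi w).
  move=> l pi; apply/funext => w; rewrite /X /Xpi mulr_sumr.
  by apply: eq_bigr => i _; rewrite mulrA.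
have EZ : forall (l : R) pi, expect P (X (fun i => l * pi i)) = l * expect P (X pi).
  move=> l pi; rewrite XZ /expect.
  have [_ Hint] : in_L1 P (X pi) by case: HL => _ [H _]; exact: H.
  rewrite (_ : (fun w => (l * X pi w)%:E) = (fun w => l%:E * (EFin \o X pi) w)%E);
    last by apply/funext.
  rewrite (integralZl _ Hint) // fineM //.
  exact: (integrable_fin_num _ Hint).
have RZ : forall (l : R) pi, 0 < l ->
    rho (X (fun i => l * pi i)) = (l%:E * rho (X pi))%E.
  by move=> l pi l0; rewrite XZ; apply: Hhom.
have fin : forall pi, (rho (X pi) < +oo)%E -> rho (X pi) = (fine (rho (X pi)))%:E.
  move=> pi; move: (Hny _ (HXL pi)); by case: (rho (X pi)).
have [pi1 [E1 [fin1 min1]]] := Hex 1 ler01.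
rewrite /Pi_nu /= in E1.
set c := fine (rho (X pi1)).
have Hc : rho (X pi1) = c%:E by exact: fin.
have Hrho1 : rho_nu P X rho 1 = c%:E.
  rewrite /rho_nu; apply/le_anti/andP; split.
    by rewrite -Hc; apply: ereal_inf_lbound; exists pi1.
  apply: le_ereal_inf_tmp => _ [pi Hpi <-]; rewrite -Hc; exact: min1.
have [pi0 [E0 [fin0 min0]]] := Hex 0 (lexx 0).
rewrite /Pi_nu /= in E0.
have H0 : rho (X pi0) = 0%:E.
  rewrite (fin _ fin0); congr EFin.
  set m := fine (rho (X pi0)).
  have Hm : rho (X pi0) = m%:E by exact: fin.
  have h1 := min0 (fun i => 2^-1 * pi0 i).
  have h2 := min0 (fun i => 2 * pi0 i).
  rewrite /Pi_nu /= !EZ E0 ?mulr0 in h1 h2.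
  have := h1 erefl; have := h2 erefl.
  rewrite !RZ ?invr_gt0 // Hm -!EFinM !lee_fin => a b.
  lra.
have L1 : forall pi, 0 <= expect P (X pi) ->
    ((expect P (X pi) * c)%:E <= rho (X pi))%E.
  move=> pi; rewrite le_eqVlt => /orP [/eqP Ez | Epos].
    rewrite -Ez mul0r -H0; apply: min0; by rewrite /Pi_nu /= -Ez.
  set nu := expect P (X pi).
  have Eq : expect P (X (fun i => nu^-1 * pi i)) = 1.
    by rewrite EZ mulVf // gt_eqF.
  have := min1 _ Eq.
  have [->|fpi] := eqVneq (rho (X pi)) +oo%E; first by rewrite leey.
  have eX : X pi = X (fun i => nu * (nu^-1 * pi i)).
    by congr X; apply/funext => i; rewrite mulrA mulfV ?gt_eqF // mul1r.
  rewrite eX RZ // Hc.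
  have fq : (rho (X (fun i => (nu^-1 * pi i)%R)) < +oo)%E.
    move: fpi; rewrite eX RZ //; move: (Hny _ (HXL (fun i => nu^-1 * pi i))).
    case: (rho (X (fun i => nu^-1 * pi i))) => //= [r0 _ _|_]; first exact: ltry.
    by rewrite mulry gtr0_sg // mul1e eqxx.
  rewrite (fin _ fq) -EFinM !lee_fin => h.
  by rewrite ler_pM2l.
have L2 : forall nu, 0 <= nu -> exists pi,
    expect P (X pi) = nu /\ rho (X pi) = (nu * c)%:E.
  move=> nu; rewrite le_eqVlt => /orP [/eqP <- | nupos].
    by exists pi0; rewrite mul0r.
  exists (fun i => nu * pi1 i); rewrite EZ E1 mulr1 RZ // Hc -EFinM; done.
have A : forall pi, rho_efficient P X rho pi ->
    rho (X pi) = (expect P (X pi) * c)%:E.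
  move=> pi [Ep Hn]; have [pi' [E' R']] := L2 _ Ep.
  apply/eqP; rewrite eq_le L1 // andbT leNgt; apply/negP => Hlt.
  apply: Hn; exists pi'; rewrite /strictly_preferred E' R'.
  by split; [split; [exact: lexx | exact: ltW] | right].
have B : 0 < c -> forall pi, 0 <= expect P (X pi) ->
    rho (X pi) = (expect P (X pi) * c)%:E -> rho_efficient P X rho pi.
  move=> cpos pi Ep HR; split => // -[pi' [[Hge Hle] Hs]].
  have E'0 : 0 <= expect P (X pi') by apply: le_trans Hge.
  have := L1 _ E'0; move: Hle Hs; rewrite HR.
  move: (rho (X pi')) => x Hle [Hs | Hs] h.
    by have := le_trans h Hle; rewrite lee_fin ler_pM2r // leNgt Hs.
  by have := le_lt_trans h Hs; rewrite lte_fin ltr_pM2r // ltNge Hge.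
split.
  split.
    move=> Hpos; rewrite Hrho1 lte_fin in Hpos.
    have [pi [Ep Rp]] := L2 0 (lexx 0).
    exists (rho (X pi), expect P (X pi)); exists pi => //.
    by apply: B => //; rewrite Ep.
  move=> [p [pi Heff _]].
  rewrite Hrho1 lte_fin ltNge; apply/negP => cle0.
  have [Ep Hn] := Heff; have HA := A pi Heff.
  have [pi'' [E'' R'']] := L2 (expect P (X pi) + 1) (addr_ge0 Ep ler01).
  apply: Hn; exists pi''; rewrite /strictly_preferred E'' R'' HA lee_fin.
  split; [split | left]; first by rewrite lerDl.
    by rewrite mulrDl mul1r gerDl.
  by rewrite ltrDl.
move=> Hpos; apply/seteqP; split.
  move=> p [pi Heff <-]; exists (expect P (X pi)); first exact: Heff.1.
  by rewrite A // Hrho1 -EFinM.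
move=> p [k k0 ->]; have [pi [Ep Rp]] := L2 k k0.
rewrite Hrho1 lte_fin in Hpos.
exists pi; first by apply: B => //; rewrite Ep.
by rewrite Rp Ep Hrho1 -EFinM.
Qed.
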